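(* The variety $\mathsf{KA}$ of Kleene algebras is 1ESP.
   Context: $\mathsf{KA}$ is the variety of Kleene algebras: bounded distributive lattices $(A,\wedge,\vee,0,1)$ with a unary operation $\neg$ satisfying $\neg\neg x\approx x$, $x\wedge y\approx\neg(\neg x\vee\neg y)$, and $x\wedge\neg x\le y\vee\neg y$. An algebra is projective in a variety $\mathsf V$ iff it is a retract of a free algebra of $\mathsf V$; exact in $\mathsf V$ if isomorphic to a finitely generated subalgebra of a finitely generated free algebra of $\mathsf V$. An algebra $\mathbf S$ is strongly projective in $\mathsf V$ if it is projective and, for every embedding $i:\mathbf S\to\mathbf P$ into an algebra $\mathbf P$ projective in $\mathsf V$, there is a homomorphism $j:\mathbf P\to\mathbf S$ with $j\circ i=\mathrm{id}_{\mathbf S}$. A variety is 1ESP if all its 1-generated exact algebras are strongly projective. *)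

(* Defs.v *)
From mathcomp Require Import ssreflect ssrfun ssrbool eqtype ssrnat fintype.

Set Implicit Arguments.
Unset Strict Implicit.

Record KA := {
  ka_car :> Type;
  ka_meet : ka_car -> ka_car -> ka_car;
  ka_join : ka_car -> ka_car -> ka_car;
  ka_zero : ka_car;
  ka_one : ka_car;
  ka_neg : ka_car -> ka_car;
  ka_meetA : forall x y z, ka_meet x (ka_meet y z) = ka_meet (ka_meet x y) z;
  ka_joinA : forall x y z, ka_join x (ka_join y z) = ka_join (ka_join x y) z;
  ka_meetC : forall x y, ka_meet x y = ka_meet y x;
  ka_joinC : forall x y, ka_join x y = ka_join y x;
  ka_meetKU : forall x y, ka_meet x (ka_join x y) = x;
  ka_joinKI : forall x y, ka_join x (ka_meet x y) = x;
  ka_meetUr : forall x y z,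
      ka_meet x (ka_join y z) = ka_join (ka_meet x y) (ka_meet x z);
  ka_join0 : forall x, ka_join ka_zero x = x;
  ka_meet1 : forall x, ka_meet ka_one x = x;
  ka_negK : forall x, ka_neg (ka_neg x) = x;
  ka_meet_neg : forall x y, ka_meet x y = ka_neg (ka_join (ka_neg x) (ka_neg y));
  ka_kleene : forall x y,
      (* x /\ neg x <= y \/ neg y, with a <= b iff a /\ b = a *)
      ka_meet (ka_meet x (ka_neg x)) (ka_join y (ka_neg y))
      = ka_meet x (ka_neg x)
}.

Definition is_hom (A B : KA) (f : A -> B) : Prop :=
  (forall x y, f (ka_meet x y) = ka_meet (f x) (f y)) /\
  (forall x y, f (ka_join x y) = ka_join (f x) (f y)) /\
  f (ka_zero A) = ka_zero B /\
  f (ka_one A) = ka_one B /\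
  (forall x, f (ka_neg x) = ka_neg (f x)).

Definition is_embedding (A B : KA) (f : A -> B) : Prop :=
  is_hom f /\ injective f.

Definition ka_closed (A : KA) (P : A -> Prop) : Prop :=
  (forall x y, P x -> P y -> P (ka_meet x y)) /\
  (forall x y, P x -> P y -> P (ka_join x y)) /\
  P (ka_zero A) /\ P (ka_one A) /\
  (forall x, P x -> P (ka_neg x)).

Definition generated_by (A : KA) (G : A -> Prop) : Prop :=
  forall P : A -> Prop, ka_closed P -> (forall x, G x -> P x) -> forall x, P x.

Definition finitely_generated (A : KA) : Prop :=
  exists (m : nat) (h : 'I_m -> A), generated_by (fun x => exists i, h i = x).

Definition one_generated (A : KA) : Prop :=
  exists a : A, generated_by (fun x => x = a).

Definition is_free (X : Type) (F : KA) (g : X -> F) : Prop :=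
  forall (B : KA) (f : X -> B),
    exists h : F -> B, is_hom h /\ (forall x, h (g x) = f x) /\
      (forall h' : F -> B, is_hom h' -> (forall x, h' (g x) = f x) ->
         forall y, h' y = h y).

Definition is_retract (A B : KA) : Prop :=
  exists (s : A -> B) (r : B -> A), is_hom s /\ is_hom r /\ forall a, r (s a) = a.

Definition projective (A : KA) : Prop :=
  exists (X : Type) (F : KA) (g : X -> F), is_free g /\ is_retract A F.

(* Exact in KA: isomorphic to a finitely generated subalgebra of a finitely
   generated free algebra, i.e. finitely generated and embeddable into a free
   algebra on finitely many generators. *)
Definition exact (A : KA) : Prop :=
  finitely_generated A /\
  exists (n : nat) (F : KA) (g : 'I_n -> F) (e : A -> F),
    is_free g /\ is_embedding e.

Definition strongly_projective (S : KA) : Prop :=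
  projective S /\
  forall (P : KA) (i : S -> P), projective P -> is_embedding i ->
    exists j : P -> S, is_hom j /\ forall s, j (i s) = s.

Definition KA_1ESP : Prop :=
  forall S : KA, one_generated S -> exact S -> strongly_projective S.

(* Main.v *)
Require Import Defs.
From mathcomp Require Import ssreflect ssrfun ssrbool eqtype ssrnat fintype.
From Stdlib Require Import Classical ClassicalEpsilon ProofIrrelevance.
From mathcomp Require classical_sets.
Set Implicit Arguments.
Unset Strict Implicit.


Definition le (A : KA) (x y : A) : Prop := ka_meet x y = x.

Lemma meetxx (A : KA) (x : A) : ka_meet x x = x.
Proof. rewrite -{2}(ka_joinKI x x). by rewrite ka_meetKU. Qed.

Lemma joinxx (A : KA) (x : A) : ka_join x x = x.
Proof. rewrite -{2}(ka_meetKU x x). by rewrite ka_joinKI. Qed.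

Lemma le_join (A : KA) (x y : A) : le x y <-> ka_join x y = y.
Proof.
split => H.
- by rewrite -H ka_joinC ka_meetC ka_joinKI.
- by rewrite /le -H ka_meetKU.
Qed.

Lemma le_refl (A : KA) (x : A) : le x x.
Proof. exact: meetxx. Qed.

Lemma le_trans (A : KA) (x y z : A) : le x y -> le y z -> le x z.
Proof. rewrite /le => H1 H2. by rewrite -H1 -ka_meetA H2. Qed.

Lemma le_antisym (A : KA) (x y : A) : le x y -> le y x -> x = y.
Proof. rewrite /le => H1 H2. by rewrite -H1 ka_meetC H2. Qed.

Lemma le_meetl (A : KA) (x y : A) : le (ka_meet x y) x.
Proof. by rewrite /le ka_meetC ka_meetA meetxx. Qed.

Lemma le_meetr (A : KA) (x y : A) : le (ka_meet x y) y.
Proof. by rewrite /le -ka_meetA meetxx. Qed.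

Lemma le_glb (A : KA) (x y z : A) : le z x -> le z y -> le z (ka_meet x y).
Proof. rewrite /le => H1 H2. by rewrite ka_meetA H1 H2. Qed.

Lemma le_joinl (A : KA) (x y : A) : le x (ka_join x y).
Proof. exact: ka_meetKU. Qed.

Lemma le_joinr (A : KA) (x y : A) : le y (ka_join x y).
Proof. rewrite ka_joinC. exact: ka_meetKU. Qed.

Lemma le_lub (A : KA) (x y z : A) : le x z -> le y z -> le (ka_join x y) z.
Proof. move=> /le_join H1 /le_join H2. apply/le_join. by rewrite -ka_joinA H2 H1. Qed.

Lemma le_meet_mono (A : KA) (x y x' y' : A) : le x x' -> le y y' -> le (ka_meet x y) (ka_meet x' y').
Proof.
move=> H1 H2; apply: le_glb.
- exact: le_trans (le_meetl _ _) H1.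
- exact: le_trans (le_meetr _ _) H2.
Qed.

Lemma meetUl (A : KA) (x y z : A) : ka_meet (ka_join y z) x = ka_join (ka_meet y x) (ka_meet z x).
Proof. by rewrite ka_meetC ka_meetUr (ka_meetC x y) (ka_meetC x z). Qed.

Lemma negJ (A : KA) (x y : A) : ka_neg (ka_join x y) = ka_meet (ka_neg x) (ka_neg y).
Proof. by rewrite ka_meet_neg !ka_negK. Qed.

Lemma negI (A : KA) (x y : A) : ka_neg (ka_meet x y) = ka_join (ka_neg x) (ka_neg y).
Proof. by rewrite ka_meet_neg ka_negK. Qed.

Lemma le_neg (A : KA) (x y : A) : le x y -> le (ka_neg y) (ka_neg x).
Proof. move=> H. apply/le_join. by rewrite -negI ka_meetC H. Qed.

Lemma le0 (A : KA) (x : A) : le (ka_zero A) x.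
Proof. rewrite /le. have := ka_meetKU (ka_zero A) x. by rewrite ka_join0. Qed.

Lemma le1 (A : KA) (x : A) : le x (ka_one A).
Proof. by rewrite /le ka_meetC ka_meet1. Qed.

Lemma neg0 (A : KA) : ka_neg (ka_zero A) = ka_one A.
Proof.
apply: le_antisym; first exact: le1.
have H : forall x : A, le (ka_neg x) (ka_neg (ka_zero A)).
  move=> x. apply: le_neg. exact: le0.
by have := H (ka_neg (ka_one A)); rewrite ka_negK.
Qed.

Lemma neg1 (A : KA) : ka_neg (ka_one A) = ka_zero A.
Proof. by rewrite -neg0 ka_negK. Qed.


Inductive k3 : Type := K0 | Km | K1.

Definition k3meet (x y : k3) : k3 :=
  match x, y with
  | K0, _ => K0 | _, K0 => K0 | K1, y => y | Km, _ => Km end.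
Definition k3join (x y : k3) : k3 :=
  match x, y with
  | K1, _ => K1 | _, K1 => K1 | K0, y => y | Km, _ => Km end.
Definition k3neg (x : k3) : k3 := match x with K0 => K1 | Km => Km | K1 => K0 end.

Definition K3 : KA.
refine (@Build_KA k3 k3meet k3join K0 K1 k3neg _ _ _ _ _ _ _ _ _ _ _ _);
  abstract (repeat (let x := fresh in intro x; destruct x); reflexivity).
Defined.

Definition infle (x y : k3) : Prop := x = Km \/ x = y.

Lemma infle_meet x y x' y' : infle x x' -> infle y y' -> infle (k3meet x y) (k3meet x' y').
Proof. by case: x; case: y; case: x'; case: y'; rewrite /infle /=; intuition discriminate. Qed.
Lemma infle_join x y x' y' : infle x x' -> infle y y' -> infle (k3join x y) (k3join x' y').
Proof. by case: x; case: y; case: x'; case: y'; rewrite /infle /=; intuition discriminate. Qed.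
Lemma infle_neg x x' : infle x x' -> infle (k3neg x) (k3neg x').
Proof. by case: x; case: x'; rewrite /infle /=; intuition discriminate. Qed.


Lemma free_uniq (X : Type) (F : KA) (g : X -> F) : is_free g ->
  forall (B : KA) (h1 h2 : F -> B), is_hom h1 -> is_hom h2 ->
  (forall x, h1 (g x) = h2 (g x)) -> forall y, h1 y = h2 y.
Proof.
move=> Hf B h1 h2 H1 H2 E y.
have [h [_ [_ hu]]] := Hf B (fun x => h1 (g x)).
rewrite (hu h1 H1 (fun x => erefl)) (hu h2 H2 (fun x => esym (E x))) //.
Qed.

Lemma sub_eq (A : KA) (P : A -> Prop) (u v : {y : A | P y}) : proj1_sig u = proj1_sig v -> u = v.
Proof.
case: u => u pu; case: v => v pv /= E. subst v. by rewrite (proof_irrelevance _ pu pv).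
Qed.

Definition subKA (A : KA) (P : A -> Prop) (HP : ka_closed P) : KA.
pose Hm := proj1 HP. pose Hj := proj1 (proj2 HP). pose H0 := proj1 (proj2 (proj2 HP)).
pose H1 := proj1 (proj2 (proj2 (proj2 HP))). pose Hn := proj2 (proj2 (proj2 (proj2 HP))).
refine (@Build_KA {y : A | P y}
  (fun u v => exist _ (ka_meet (proj1_sig u) (proj1_sig v)) (Hm _ _ (proj2_sig u) (proj2_sig v)))
  (fun u v => exist _ (ka_join (proj1_sig u) (proj1_sig v)) (Hj _ _ (proj2_sig u) (proj2_sig v)))
  (exist _ (ka_zero A) H0) (exist _ (ka_one A) H1)
  (fun u => exist _ (ka_neg (proj1_sig u)) (Hn _ (proj2_sig u))) _ _ _ _ _ _ _ _ _ _ _ _);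
  intros; apply: sub_eq => /=.
- exact: ka_meetA.
- exact: ka_joinA.
- exact: ka_meetC.
- exact: ka_joinC.
- exact: ka_meetKU.
- exact: ka_joinKI.
- exact: ka_meetUr.
- exact: ka_join0.
- exact: ka_meet1.
- exact: ka_negK.
- exact: ka_meet_neg.
- exact: ka_kleene.
Defined.

Lemma free_ind (X : Type) (F : KA) (g : X -> F) : is_free g ->
  forall P : F -> Prop, ka_closed P -> (forall x, P (g x)) -> forall y, P y.
Proof.
move=> Hf P HP Hg y.
have [h [hh [hg _]]] := Hf (subKA HP) (fun x => exist P (g x) (Hg x)).
have E : forall y, proj1_sig (h y) = y.
  apply: (free_uniq Hf (h1 := fun y => proj1_sig (h y)) (h2 := id)).
  - case: hh => hm [hj [h0 [h1 hn]]].
    split; [|split; [|split; [|split]]].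
    + by move=> a b; rewrite hm.
    + by move=> a b; rewrite hj.
    + by rewrite h0.
    + by rewrite h1.
    + by move=> a; rewrite hn.
  - by split; [|split; [|split; [|split]]].
  - by move=> x; rewrite hg.
rewrite -(E y). exact: proj2_sig.
Qed.

Lemma free_mono (X : Type) (F : KA) (g : X -> F) : is_free g ->
  forall k1 k2 : F -> K3, is_hom k1 -> is_hom k2 ->
  (forall x, infle (k1 (g x)) (k2 (g x))) -> forall y, infle (k1 y) (k2 y).
Proof.
move=> Hf k1 k2 [m1 [j1 [z1 [o1 n1]]]] [m2 [j2 [z2 [o2 n2]]]] Hg.
apply: (free_ind Hf) => //.
split; [|split; [|split; [|split]]].
- move=> x y Hx Hy. rewrite m1 m2. exact: infle_meet.
- move=> x y Hx Hy. rewrite j1 j2. exact: infle_join.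
- rewrite z1 z2. by right.
- rewrite o1 o2. by right.
- move=> x Hx. rewrite n1 n2. exact: infle_neg.
Qed.


Definition pfilter (A : KA) (P : A -> Prop) :=
  (forall x y, P x -> le x y -> P y) /\ (forall x y, P x -> P y -> P (ka_meet x y)) /\
  ~ P (ka_zero A) /\ P (ka_one A) /\ (forall x y, P (ka_join x y) -> P x \/ P y).

Definition Pz (A : KA) (y1 y2 : A) (B : A -> Prop) : Prop :=
  (forall x y, B x -> le x y -> B y) /\ (forall x y, B x -> B y -> B (ka_meet x y)) /\
  ~ B y2 /\ ((exists z, B z) -> B y1).

Lemma prime_exists (A : KA) (y1 y2 : A) : ~ le y1 y2 ->
  exists P : A -> Prop, pfilter P /\ P y1 /\ ~ P y2.
Proof.
move=> Hn.
have Hch : forall C : classical_sets.set (classical_sets.set A),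
    classical_sets.subset C (Pz y1 y2) -> classical_sets.total_on C classical_sets.subset ->
    Pz y1 y2 (classical_sets.bigcup C (fun X => X)).
  move=> C CP Ctot. split; [|split; [|split]].
  - move=> x y [X CX Xx] Hxy. exists X => //. have [Xu _] := CP X CX. exact: Xu Xx Hxy.
  - move=> x y [X CX Xx] [Y CY Yy].
    have [XY|YX] := Ctot X Y CX CY.
    + exists Y => //. have [_ [Ym _]] := CP Y CY. exact: Ym (XY _ Xx) Yy.
    + exists X => //. have [_ [Xm _]] := CP X CX. exact: Xm Xx (YX _ Yy).
  - move=> [X CX Xy2]. have [_ [_ [H _]]] := CP X CX. exact: H.
  - move=> [z [X CX Xz]]. exists X => //. have [_ [_ [_ H]]] := CP X CX. apply: H. by exists z.
have [M [[Mu [Mm [My2 My1]]] Mmax]] := classical_sets.Zorn_bigcup Hch.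
have MY1 : M y1.
  apply: NNPP => H. apply: (Mmax (fun z => le y1 z)).
  - split.
    + move=> t Mt. exfalso. apply: H. apply: My1. by exists t.
    + move=> Hs. apply: H. apply: Hs. exact: le_refl.
  - split; [|split; [|split]].
    + move=> x y H1 H2. exact: le_trans H1 H2.
    + move=> x y H1 H2. exact: le_glb.
    + exact: Hn.
    + move=> _. exact: le_refl.
exists M. split; last by split.
have M1 : M (ka_one A) by apply: Mu MY1 (le1 _).
have Mext : forall p, ~ M p -> (exists m, M m /\ le (ka_meet m p) y2).
  move=> p Hp. apply: NNPP => Hno.
  apply: (Mmax (fun z => exists m, M m /\ le (ka_meet m p) z)).
  - split.
    + move=> t Mt. exists t. split => //. exact: le_meetl.
    + move=> Hs. apply: Hp. apply: Hs. exists y1. split => //. exact: le_meetr.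
  - split; [|split; [|split]].
    + move=> x y [m [Mm' H1]] H2. exists m. split => //. exact: le_trans H1 H2.
    + move=> x y [m [Mm1 H1]] [m' [Mm2 H2]]. exists (ka_meet m m'). split; first exact: Mm.
      apply: le_trans (le_meet_mono H1 H2). apply: le_glb.
      * apply: le_meet_mono; [exact: le_meetl | exact: le_refl].
      * apply: le_meet_mono; [exact: le_meetr | exact: le_refl].
    + exact: Hno.
    + move=> _. exists y1. split => //. exact: le_meetl.
split; [exact: Mu|split; [exact: Mm|split; [|split; [exact: M1|]]]].
- move=> H0. apply: My2. apply: (Mu) H0 (le0 _).
- move=> p q Hpq. apply: NNPP => Hno.
  have Hp : ~ M p by move=> H; apply: Hno; left.
  have Hq : ~ M q by move=> H; apply: Hno; right.
  have [m1 [Mm1 H1]] := Mext p Hp.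
  have [m2 [Mm2 H2]] := Mext q Hq.
  apply: My2. apply: ((Mu) (ka_meet (ka_meet m1 m2) (ka_join p q))).
    apply: (Mm) => //. exact: (Mm).
  rewrite ka_meetUr. apply: le_lub.
  + apply: le_trans H1. apply: le_meet_mono; [exact: le_meetl | exact: le_refl].
  + apply: le_trans H2. apply: le_meet_mono; [exact: le_meetr | exact: le_refl].
Qed.

Lemma pf_meet (A : KA) (P : A -> Prop) : pfilter P -> forall x y, P (ka_meet x y) <-> P x /\ P y.
Proof.
move=> [Pu [Pm _]] x y; split.
- move=> H; split; [exact: Pu H (le_meetl _ _) | exact: Pu H (le_meetr _ _)].
- by case=> ??; apply: Pm.
Qed.

Lemma pf_join (A : KA) (P : A -> Prop) : pfilter P -> forall x y, P (ka_join x y) <-> P x \/ P y.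
Proof.
move=> [Pu [_ [_ [_ Pp]]]] x y; split.
- exact: Pp.
- case=> H; [exact: Pu H (le_joinl _ _) | exact: Pu H (le_joinr _ _)].
Qed.

Definition hQR (A : KA) (Q R : A -> Prop) (z : A) : k3 :=
  if excluded_middle_informative (Q z) then K1
  else if excluded_middle_informative (R z) then Km else K0.

Lemma kalman_hom (A : KA) (Q R : A -> Prop) : pfilter Q -> pfilter R ->
  (forall z, Q z -> R z) -> (forall z, Q z <-> ~ R (ka_neg z)) ->
  is_hom (B := K3) (hQR Q R).
Proof.
move=> pQ pR QR QnR.
have hQ : forall z, Q z -> hQR Q R z = K1.
  move=> z qz; rewrite /hQR. by destruct (excluded_middle_informative (Q z)).
have hM : forall z, ~ Q z -> R z -> hQR Q R z = Km.
  move=> z qz rz; rewrite /hQR. destruct (excluded_middle_informative (Q z)) => //.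
  by destruct (excluded_middle_informative (R z)).
have h0 : forall z, ~ R z -> hQR Q R z = K0.
  move=> z rz; rewrite /hQR. destruct (excluded_middle_informative (Q z)) as [qz|nq].
    by case: rz; apply: QR.
  by destruct (excluded_middle_informative (R z)).
Ltac ev hQ hM h0 Q R z := let H1 := fresh in let H2 := fresh in
  case (classic (Q z)) => H1; [rewrite (hQ z H1) | case (classic (R z)) => H2;
    [rewrite (hM z H1 H2) | rewrite (h0 z H2)]].
have [Qu [Qm [Q0 [Q1 Qp]]]] := pQ.
have [Ru [Rm [R0 [R1 Rp]]]] := pR.
split; [|split; [|split; [|split]]].
- move=> x y.
  have := pf_meet pQ x y; have := pf_meet pR x y; have := QR x; have := QR y; have := QR (ka_meet x y).
  ev hQ hM h0 Q R (ka_meet x y); ev hQ hM h0 Q R x; ev hQ hM h0 Q R y; simpl; tauto.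
- move=> x y.
  have := pf_join pQ x y; have := pf_join pR x y; have := QR x; have := QR y; have := QR (ka_join x y).
  ev hQ hM h0 Q R (ka_join x y); ev hQ hM h0 Q R x; ev hQ hM h0 Q R y; simpl; tauto.
- exact: h0.
- exact: hQ.
- move=> x.
  have e1 : Q (ka_neg x) <-> ~ R x by rewrite (QnR (ka_neg x)) ka_negK.
  have e2 : R (ka_neg x) <-> ~ Q x.
    rewrite (QnR x). split; [tauto| exact: NNPP].
  have := QR x; have := QR (ka_neg x). move: e1 e2.
  ev hQ hM h0 Q R (ka_neg x); ev hQ hM h0 Q R x; simpl; tauto.
Qed.

Lemma sep_le (A : KA) (y1 y2 : A) : ~ le y1 y2 ->
  exists k : A -> K3, is_hom (B := K3) k /\ k y1 <> k y2.
Proof.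
move=> Hn. have [P [pP [Py1 Py2]]] := prime_exists Hn.
have [Pu [Pm [P0 [P1 Pp]]]] := pP.
pose Ps := fun z : A => ~ P (ka_neg z).
have pPs : pfilter Ps.
  split; [|split; [|split; [|split]]].
  - move=> x y Hx Hxy Hy. apply: Hx. exact: Pu Hy (le_neg Hxy).
  - move=> x y Hx Hy H. rewrite /Ps negI in H. by case: (Pp _ _ H).
  - rewrite /Ps neg0. tauto.
  - rewrite /Ps neg1. exact: P0.
  - move=> x y H. apply: NNPP => H'. apply: H. rewrite negJ. apply: Pm; apply: NNPP => ?; tauto.
have comp : (forall z, P z -> Ps z) \/ (forall z, Ps z -> P z).
  apply: NNPP => H.
  have [p Hp] : exists p, ~ (P p -> Ps p).
    apply: not_all_ex_not => H1. apply: H. by left.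
  have [q Hq] : exists q, ~ (Ps q -> P q).
    apply: not_all_ex_not => H1. apply: H. by right.
  have pp : P p by tauto.
  have pnp : P (ka_neg p) by apply: NNPP; tauto.
  have psq : Ps q by tauto.
  have nq : ~ P q by tauto.
  have : P (ka_join q (ka_neg q)).
    apply: Pu (ka_kleene p q). exact: Pm.
  case/Pp => //.
case: comp => comp.
- have hh := @kalman_hom A P Ps pP pPs comp.
  have e : forall z, P z <-> ~ Ps (ka_neg z).
    move=> z. rewrite /Ps ka_negK. split; [tauto | exact: NNPP].
  exists (hQR P Ps). split; first exact: hh e.
  rewrite /hQR. destruct (excluded_middle_informative (P y1)) => //.
  destruct (excluded_middle_informative (P y2)) => //.
  by destruct (excluded_middle_informative (Ps y2)).
- have hh := @kalman_hom A Ps P pPs pP comp.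
  have e : forall z, Ps z <-> ~ P (ka_neg z) by [].
  exists (hQR Ps P). split; first exact: hh e.
  rewrite /hQR. destruct (excluded_middle_informative (Ps y2)) as [h2|h2].
    by case: Py2; apply: comp.
  destruct (excluded_middle_informative (P y2)) => //.
  destruct (excluded_middle_informative (Ps y1)) => //.
  by destruct (excluded_middle_informative (P y1)).
Qed.

Lemma separate (A : KA) (y1 y2 : A) :
  (forall k : A -> K3, is_hom (B := K3) k -> k y1 = k y2) -> y1 = y2.
Proof.
move=> H. apply: le_antisym; apply: NNPP => Hn.
- have [k [hk nk]] := sep_le Hn. apply: nk. exact: H.
- have [k [hk nk]] := sep_le Hn. apply: nk. symmetry. exact: H.
Qed.


Lemma hom_comp (A B C : KA) (f : A -> B) (h : B -> C) : is_hom f -> is_hom h -> is_hom (fun x => h (f x)).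
Proof.
move=> [m1 [j1 [z1 [o1 n1]]]] [m2 [j2 [z2 [o2 n2]]]].
split; [|split; [|split; [|split]]].
- by move=> x y; rewrite m1 m2.
- by move=> x y; rewrite j1 j2.
- by rewrite z1 z2.
- by rewrite o1 o2.
- by move=> x; rewrite n1 n2.
Qed.

Lemma hom_id (A : KA) : is_hom (fun x : A => x).
Proof. by split; [|split; [|split; [|split]]]. Qed.

Definition isK1 (z : k3) : bool := match z with K1 => true | _ => false end.

Lemma choose_val (X : Type) (F : KA) (g : X -> F) (Hf : is_free g) (w : F) (t : k3) :
  t <> Km -> exists b : X -> bool,
    (exists k : F -> K3, is_hom (B := K3) k /\ k w = t) ->
    forall k' : F -> K3, is_hom (B := K3) k' ->
      (forall x, k' (g x) = if b x then K1 else K0) -> k' w = t.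
Proof.
move=> Ht. case: (classic (exists k : F -> K3, is_hom (B := K3) k /\ k w = t)) => [[k [hk kw]]|no].
- exists (fun x => isK1 (k (g x))) => _ k' hk' k'g.
  have Hm : forall y, infle (k y) (k' y).
    apply: (free_mono Hf hk hk') => x.
    rewrite k'g. case: (k (g x)) => /=; [right|left|right]; reflexivity.
  have := Hm w. rewrite kw. case=> [E|E]; [by case: Ht | by rewrite E].
- exists (fun _ => false) => H. by case: no.
Qed.

Definition Tfun (b0 b1 : bool) (t : k3) : k3 :=
  match t with
  | K0 => if b0 then K1 else K0
  | K1 => if b1 then K1 else K0
  | Km => Km end.

Lemma core (S : KA) (a : S) (X : Type) (F : KA) (g : X -> F) : is_free g ->
  forall phi : S -> F, is_embedding phi -> exists J : F -> S, is_hom J /\ J (phi a) = a.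
Proof.
move=> Hf phi [hphi injphi].
have [b0 Hb0] := choose_val Hf (phi a) (t := K0) ltac:(discriminate).
have [b1 Hb1] := choose_val Hf (phi a) (t := K1) ltac:(discriminate).
pose f := fun x => if b0 x then (if b1 x then ka_join a (ka_neg a) else ka_neg a)
                   else (if b1 x then a else ka_meet a (ka_neg a)).
have [J [hJ [Jg _]]] := Hf S f.
exists J. split => //.
apply: injphi. apply: separate => k hk.
pose T := fun x => Tfun (b0 x) (b1 x) (k (phi a)).
have [kT [hkT [kTg _]]] := Hf K3 T.
have E1 : forall y, k (phi (J y)) = kT y.
  apply: (free_uniq Hf (h1 := fun y => k (phi (J y)))) => //.
    exact: hom_comp (hom_comp hJ hphi) hk.
  move=> x. rewrite Jg kTg /T /f.
  have [pm [pj [_ [_ pn]]]] := hphi.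
  have [km [kj [_ [_ kn]]]] := hk.
  case: (b0 x); case: (b1 x); rewrite ?pm ?pj ?pn ?km ?kj ?kn;
    by case: (k (phi a)).
rewrite E1.
case Et: (k (phi a)).
- apply: Hb0; first by exists k.
  + exact: hkT.
  + by move=> x; rewrite kTg /T Et.
- have Hm : forall y, infle (kT y) (k y).
    apply: (free_mono Hf hkT hk) => x. rewrite kTg /T Et. by left.
  have := Hm (phi a). rewrite Et. by case.
- apply: Hb1; first by exists k.
  + exact: hkT.
  + by move=> x; rewrite kTg /T Et.
Qed.

Lemma strong (S : KA) (a : S) : generated_by (fun x => x = a) ->
  forall (P : KA) (i : S -> P), projective P -> is_embedding i ->
    exists j : P -> S, is_hom j /\ forall s, j (i s) = s.
Proof.
move=> Hgen P i [X [F [g [Hf [s [r [hs [hr rs]]]]]]]] [hi inji].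
have emb : is_embedding (fun z => s (i z)).
  split; first exact: hom_comp hi hs.
  move=> x y E. apply: inji. by rewrite -(rs (i x)) -(rs (i y)) E.
have [J [hJ Ja]] := core a Hf emb.
exists (fun p => J (s p)). split; first exact: hom_comp hs hJ.
have [im [ij [i0 [i1 ineg]]]] := hi.
have [sm [sj [s0 [s1 sn]]]] := hs.
have [Jm [Jj [J0 [J1 Jn]]]] := hJ.
apply: Hgen.
- split; [|split; [|split; [|split]]].
  + by move=> x y Hx Hy; rewrite im sm Jm Hx Hy.
  + by move=> x y Hx Hy; rewrite ij sj Jj Hx Hy.
  + by rewrite i0 s0 J0.
  + by rewrite i1 s1 J1.
  + by move=> x Hx; rewrite ineg sn Jn Hx.
- by move=> x ->.
Qed.

Theorem theorem5p8 :
  forall S : KA, one_generated S -> exact S -> strongly_projective S.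
Proof.
move=> S [a Hgen] [_ [n [F [g [e [Hf He]]]]]].
split.
- have HF : projective F.
    exists 'I_n, F, g. split => //. exists (fun x => x), (fun x => x).
    split; [exact: hom_id | split; [exact: hom_id | by []]].
  have [j [hj je]] := strong Hgen HF He.
  exists 'I_n, F, g. split => //. exists e, j. split; [exact: (proj1 He) | by split].
- move=> P i HP Hi. have H := strong Hgen HP Hi. exact: H.
Qed.
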